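(* Let $\eta\in D$ with $|\eta|=|i|$ and let $a_1\in\mathcal{O}_D^*$ be a pure quaternion. Then $T\big(2(\eta a_1\bar\eta)^{-1}a_1\big)\in\pi\mathcal{O}_k$.
   Context: $k$ is a dyadic local field of characteristic $0$ with ring of integers $\mathcal{O}_k$ and uniformizer $\pi$; $\Delta\in\mathcal{O}_k^*$ is a unit of minimal quadratic defect. $D=\left(\frac{\pi,\Delta}{k}\right)$ is the quaternion division algebra with basis $1,i,j,ij$, $i^2=\pi$, $j^2=\Delta$, $ij=-ji$; $q\mapsto\bar q$ is the canonical involution, $N$ the reduced norm, $T$ the reduced trace, $|q|:=|N(q)|_k$, and $\mathcal{O}_D=\{q:|q|\le1\}$. A pure quaternion is $q$ with $\bar q=-q$. *)

(* Defs.v *)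
From HB Require Import structures.
From mathcomp Require Import all_boot all_order all_algebra.
Set Implicit Arguments. Unset Strict Implicit. Unset Printing Implicit Defensive.
Import Order.TTheory GRing.Theory Num.Theory.
Local Open Scope ring_scope.

Section Local.
Variable k : fieldType.
Variable v : k -> int.   (* discrete valuation, meaningful on nonzero elements *)

Definition inO (x : k) : Prop := x = 0 \/ 0 <= v x.

Definition in_ideal (a x : k) : Prop := exists c, inO c /\ x = a * c.

(** |x|_k = |y|_k  (for the normalized absolute value |x| = q^(-v x), |0| = 0) *)
Definition abs_eq (x y : k) : Prop :=
  (x = 0 /\ y = 0) \/ [/\ x != 0, y != 0 & v x = v y].

(** (k, v) is a non-archimedean local field of characteristic 0 which is dyadic:
    v is a normalized discrete valuation, k is complete for it, the residue
    field O_k / pi O_k is finite, char k = 0 and v 2 > 0. *)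
Definition dyadic_local_field : Prop :=
  (forall x y, x != 0 -> y != 0 -> v (x * y) = v x + v y) /\
      (forall x y, x != 0 -> y != 0 -> x + y != 0 ->
                    Num.min (v x) (v y) <= v (x + y)) /\
      (forall n : int, exists x, x != 0 /\ v x = n) /\
      (forall u : nat -> k,
         (forall N : int, exists m, forall p q, (m <= p)%N -> (m <= q)%N ->
              u p - u q = 0 \/ N <= v (u p - u q)) ->
         exists l, forall N : int, exists m, forall p, (m <= p)%N ->
              u p - l = 0 \/ N <= v (u p - l)) /\
      (exists s : seq k, (forall y, y \in s -> inO y) /\
         forall x, inO x -> exists2 y, y \in s & (x - y = 0 \/ 1 <= v (x - y))) /\
      (forall n : nat, n.+1%:R != 0 :> k) /\
      0 < v 2.

(** Delta is a unit of minimal quadratic defect: d(Delta) = 4 O_k, where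
    d(Delta) = \bigcap_{x in k} (Delta - x^2) O_k. *)
Definition min_quad_defect_unit (Delta : k) : Prop :=
  [/\ Delta != 0, v Delta = 0 &
      forall y, (forall x, in_ideal (Delta - x ^+ 2) y) <-> in_ideal 4 y].

(** Quaternions a + b i + c j + d ij over k, with i^2 = pi, j^2 = Delta, ij = -ji. *)
Record quat := Quat { q0 : k; q1 : k; q2 : k; q3 : k }.

Variables (pi Delta : k).

Definition qmul (x y : quat) : quat :=
  let: Quat a1 b1 c1 d1 := x in let: Quat a2 b2 c2 d2 := y in
  Quat (a1 * a2 + pi * b1 * b2 + Delta * c1 * c2 - pi * Delta * d1 * d2)
       (a1 * b2 + b1 * a2 - Delta * c1 * d2 + Delta * d1 * c2)
       (a1 * c2 + c1 * a2 + pi * b1 * d2 - pi * d1 * b2)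
       (a1 * d2 + d1 * a2 + b1 * c2 - c1 * b2).

Definition qscal (r : k) (x : quat) : quat :=
  Quat (r * q0 x) (r * q1 x) (r * q2 x) (r * q3 x).

Definition qopp (x : quat) : quat := qscal (-1) x.

Definition qconj (x : quat) : quat := Quat (q0 x) (- q1 x) (- q2 x) (- q3 x).

(** reduced norm  N(q) = q * conj q *)
Definition qnorm (x : quat) : k :=
  q0 x ^+ 2 - pi * q1 x ^+ 2 - Delta * q2 x ^+ 2 + pi * Delta * q3 x ^+ 2.

(** reduced trace  T(q) = q + conj q *)
Definition qtrace (x : quat) : k := 2 * q0 x.

Definition qinv (x : quat) : quat := qscal (qnorm x)^-1 (qconj x).

Definition qi : quat := Quat 0 1 0 0.
Definition qcst (r : k) : quat := Quat r 0 0 0.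

Definition is_division : Prop := forall x, qnorm x = 0 -> x = Quat 0 0 0 0.

Definition pure (x : quat) : Prop := qconj x = qopp x.

(** O_D = { q : |q| <= 1 } and its units *)
Definition inOD (x : quat) : Prop := inO (qnorm x).
Definition unitOD (x : quat) : Prop :=
  [/\ x <> Quat 0 0 0 0, inOD x & inOD (qinv x)].

End Local.

(* Main.v *)
Require Import Defs.
From HB Require Import structures.
From mathcomp Require Import all_boot all_order all_algebra zify ring.
From Stdlib Require Import Classical.
Import Order.TTheory GRing.Theory Num.Theory.
Local Open Scope ring_scope.

Lemma Tform (k : fieldType) (pi D : k) (x y : quat k) :
  qtrace (qmul pi D (qscal 2 (qinv pi D x)) y) = 4 * (qnorm pi D x)^-1 * q0 (qmul pi D (qconj x) y).
Proof. case: x => x0 x1 x2 x3; case: y => y0 y1 y2 y3; rewrite /qtrace /qinv /=; ring. Qed.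

Lemma qnorm_scal (k : fieldType) (pi D r : k) (x : quat k) :
  qnorm pi D (qscal r x) = r ^+ 2 * qnorm pi D x.
Proof. by case: x => x0 x1 x2 x3; rewrite /qnorm /=; ring. Qed.
Lemma qnorm_conj (k : fieldType) (pi D : k) (x : quat k) :
  qnorm pi D (qconj x) = qnorm pi D x.
Proof. by case: x => x0 x1 x2 x3; rewrite /qnorm /=; ring. Qed.

Section Ids.
Variable k : fieldType. Variables (pi D e0 e1 e2 e3 b c d dl : k).
Let eta := Quat e0 e1 e2 e3. Let a := Quat 0 b c d.
Let q := qmul pi D (qmul pi D eta a) (qconj eta).
Let n := qnorm pi D eta. Let na := qnorm pi D a.
Lemma i1 : qnorm pi D q = n^+2 * na.
Proof. rewrite /q /n /na /qnorm /=. ring. Qed.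
Let z := qmul pi D (qmul pi D (qmul pi D eta (Quat (-dl) (-b) (-c) (-d))) (qconj eta)) (Quat (-dl) b c d).
Lemma i2 : q0 (qmul pi D (qconj q) a) = - dl^+2 * n + q0 z.
Proof. rewrite /q /n /z /qnorm /=. ring. Qed.
Lemma i3 : qnorm pi D (Quat (-dl) b c d) = dl^+2 + na.
Proof. rewrite /na /qnorm /=. ring. Qed.
Lemma i5 : qnorm pi D z = n^+2 * (qnorm pi D (Quat (-dl) b c d))^+2.
Proof. rewrite /z /n /qnorm /=. ring. Qed.
End Ids.

Ltac vlia v := repeat match goal with H : context [v _] |- _ => revert H end;
 repeat match goal with H : ?T |- _ => match type of T with Prop => clear H end end;
 repeat match goal with |- context [v ?a] => let t := fresh "t" in set t := v a; clearbody t end;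
 intros; lia.

Section Val.
Variables (k : fieldType) (v : k -> int).
Hypothesis vM : forall {x y}, x != 0 -> y != 0 -> v (x*y) = v x + v y.
Hypothesis vU : forall {x y}, x != 0 -> y != 0 -> x + y != 0 ->
  Num.min (v x) (v y) <= v (x+y).

Lemma v1 : v 1 = 0.
Proof. have := vM (oner_neq0 k) (oner_neq0 k); rewrite mulr1; set a := v 1; lia. Qed.

Lemma vN x : v (- x) = v x.
Proof.
have h1 : (-1 : k) != 0 by rewrite oppr_eq0 oner_eq0.
have : v (-1) = 0 by have := vM h1 h1; rewrite mulrNN mulr1 v1; lia.
have [->|xn] := eqVneq x 0; first by rewrite oppr0.
by move=> e; rewrite -mulN1r vM // e add0r.
Qed.

Lemma vX2 x : x != 0 -> v (x ^+ 2) = 2 * v x.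
Proof. by move=> xn; rewrite expr2 vM //; lia. Qed.

Lemma vV x : x != 0 -> v (x^-1) = - v x.
Proof.
move=> xn; have xi : x^-1 != 0 by rewrite invr_eq0.
have := vM xn xi; rewrite mulfV // v1; lia.
Qed.

Lemma vU' x y : x != 0 -> y != 0 -> x + y != 0 -> v x <= v (x+y) \/ v y <= v (x+y).
Proof. by move=> a b c; have := vU a b c; rewrite ge_min => /orP. Qed.

Lemma vU2 m x y : x != 0 -> y != 0 -> x + y != 0 -> m <= v x -> m <= v y -> m <= v (x+y).
Proof. move=> a b c h1 h2; case: (vU' _ _ a b c) => h; lia. Qed.

Definition P m x := x = 0 \/ m <= v x.

Lemma PD m x y : P m x -> P m y -> P m (x + y).
Proof.
case=> [->|hx]; first by rewrite add0r.
case=> [->|hy]; first by rewrite addr0; right.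
have [xn|/negP xn] := boolP (x != 0); last by move/negP: xn; rewrite negbK => /eqP ->; rewrite add0r; right.
have [yn|/negP yn] := boolP (y != 0); last by move/negP: yn; rewrite negbK => /eqP ->; rewrite addr0; right.
have [e|ne] := eqVneq (x + y) 0; first by left.
by right; apply: vU2.
Qed.

Lemma PN m x : P m x -> P m (- x).
Proof. by case=> [->|h]; [left; rewrite oppr0 | right; rewrite vN]. Qed.

Lemma sharp x y : x != 0 -> y != 0 -> v x < v y -> x + y != 0 /\ v (x + y) = v x.
Proof.
move=> xn yn lt.
have s : x + y != 0.
  apply/negP => /eqP e; have : y = - x by rewrite -(addKr x y) e addr0.
  move=> ey; move: lt; rewrite ey vN; lia.
split=> //.
have ny : - y != 0 by rewrite oppr_eq0.
have e : x = (x + y) + - y by rewrite addrK.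
have := vU' _ _ s ny; rewrite -e vN => /(_ xn) h1.
have h2 := vU' _ _ xn yn s.
clear -h1 h2 lt; case: h1 => h1; case: h2 => h2; lia.
Qed.

Section Delta.
Variable Delta : k.
Hypothesis v2 : 0 < v 2.
Hypothesis n2 : (2 : k) != 0.
Hypothesis DnZ : Delta != 0.
Hypothesis vD : v Delta = 0.
Hypothesis D1 : forall x, Delta - x ^+ 2 != 0 /\ v (Delta - x ^+ 2) <= 2 * v 2.
Hypothesis D2 : exists x0, Delta - x0 ^+ 2 != 0 /\ 2 * v 2 <= v (Delta - x0 ^+ 2).

Lemma L0 x : x != 0 -> v x < 0 -> x ^+ 2 - Delta != 0 /\ v (x ^+ 2 - Delta) = 2 * v x.
Proof.
move=> xn lt; have x2 : x ^+ 2 != 0 by rewrite expf_eq0.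
have nD : - Delta != 0 by rewrite oppr_eq0.
rewrite -vX2 //; apply: sharp => //; rewrite vN vD vX2 //; vlia v.
Qed.

Lemma L1 x : x != 0 -> 0 < v x -> x ^+ 2 - Delta != 0 /\ v (x ^+ 2 - Delta) = 0.
Proof.
move=> xn lt; have x2 : x ^+ 2 != 0 by rewrite expf_eq0.
have nD : - Delta != 0 by rewrite oppr_eq0.
rewrite addrC; have [h1 h2] := sharp _ _ nD x2 ltac:(rewrite vN vD vX2 //; vlia v).
by rewrite h2 vN vD.
Qed.

Lemma vDx x : v (x ^+ 2 - Delta) = v (Delta - x ^+ 2).
Proof. by rewrite -vN opprB. Qed.

Lemma x0unit x0 : Delta - x0 ^+ 2 != 0 -> 0 < v (Delta - x0 ^+ 2) -> x0 != 0 /\ v x0 = 0.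
Proof.
move=> nz lt.
have [e|xn] := eqVneq x0 0; first by move: lt; rewrite e expr0n /= subr0 vD.
split=> //.
case: (ltgtP (v x0) 0) => // h.
- have [_ ] := L0 _ xn h; move: lt; rewrite -vDx => H1 H2; vlia v.
- by have [_ ] := L1 _ xn h; move: lt; rewrite -vDx => H1 H2; vlia v.
Qed.

Lemma Par x : x ^+ 2 - Delta != 0 /\ exists e, v (x ^+ 2 - Delta) = 2 * e.
Proof.
have nz : x ^+ 2 - Delta != 0 by rewrite -oppr_eq0 opprB; case: (D1 x).
split=> //.
have [e|xn] := eqVneq x 0.
  by exists 0; rewrite e expr0n /= add0r vN vD.
case: (ltgtP (v x) 0) => h.
- by have [_ ->] := L0 _ xn h; exists (v x).
- by have [_ ->] := L1 _ xn h; exists 0.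
apply: NNPP => ne.
have [x0 [x0n x0v]] := D2.
have [_ hm] := D1 x.
set m := v (Delta - x ^+ 2) in hm.
have mlt : m < 2 * v 2.
  rewrite lt_neqAle hm andbT; apply/negP => /eqP em; apply: ne; exists (v 2).
  by rewrite vDx -/m em.
have [x0nz vx0] := x0unit _ x0n ltac:(vlia v).
have nm : - (Delta - x ^+ 2) != 0 by rewrite oppr_eq0; case: (D1 x).
have [snz sv] := sharp _ _ nm x0n ltac:(rewrite vN -/m; vlia v).
have es : - (Delta - x ^+ 2) + (Delta - x0 ^+ 2) = (x - x0) * ((x - x0) + 2 * x0) by ring.
rewrite es in snz sv; rewrite vN -/m in sv.
move: snz; rewrite mulf_eq0 negb_or => /andP [wn w2n].
have n2x : 2 * x0 != 0 by rewrite mulf_neq0.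
have v2x : v (2 * x0) = v 2 by rewrite vM // vx0 addr0.
rewrite vM // in sv.
case: (ltP (v (x - x0)) (v 2)) => hw.
  have [_ hs] := sharp _ _ wn n2x ltac:(rewrite v2x; vlia v).
  by apply: ne; exists (v (x - x0)); rewrite vDx -/m -sv hs; vlia v.
have := vU2 (v 2) _ _ wn n2x w2n hw ltac:(rewrite v2x; vlia v).
clear -sv hw mlt; vlia v.
Qed.


Definition M s t := s ^+ 2 - Delta * t ^+ 2.

Lemma Mfacts s t : (s != 0) || (t != 0) ->
  [/\ M s t != 0, exists e, v (M s t) = 2 * e & s != 0 -> v (M s t) <= 2 * v (2 * s)].
Proof.
rewrite /M; case: (eqVneq t 0) => [->|tn].
  rewrite orbF => sn; rewrite expr0n /= mulr0 subr0.
  split; [by rewrite expf_neq0 | by exists (v s); rewrite vX2 |].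
  by move=> _; rewrite vX2 // vM //; vlia v.
move=> _.
set x := s / t.
have e : s ^+ 2 - Delta * t ^+ 2 = t ^+ 2 * (x ^+ 2 - Delta) by rewrite /x; field.
have t2 : t ^+ 2 != 0 by rewrite expf_neq0.
have [xnz [e1 he]] := Par x.
rewrite e; split; first by rewrite mulf_neq0.
  by exists (v t + e1); rewrite vM // vX2 // he; ring.
move=> sn.
have xn : x != 0 by rewrite /x mulf_neq0 // invr_eq0.
have es : s = x * t by rewrite /x; field. clearbody x.
rewrite es vM // vX2 // ?vM // ?mulf_neq0 //.
case: (ltgtP (v x) 0) => h.
- by have [_ ->] := L0 _ xn h; vlia v.
- by have [_ ->] := L1 _ xn h; vlia v.
- by have [_ ] := D1 x; rewrite -vDx => hb; vlia v.
Qed.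

Variable pi : k.
Hypothesis pn : pi != 0.
Hypothesis vpi : v pi = 1.

Lemma piM s t : (s != 0) || (t != 0) ->
  - (pi * M s t) != 0 /\ exists e, v (- (pi * M s t)) = 2 * e + 1.
Proof.
move=> h; have [Mn [e he] _] := Mfacts _ _ h.
split; first by rewrite oppr_eq0 mulf_neq0.
by exists e; rewrite vN vM // he vpi addrC.
Qed.

Lemma W2 z0 z1 z2 z3 : z0 != 0 ->
  M z0 z2 - pi * M z1 z3 != 0 /\ v (M z0 z2 - pi * M z1 z3) <= 2 * v (2 * z0).
Proof.
move=> zn.
have [M0n [e0 he0] hb] := Mfacts z0 z2 ltac:(by rewrite zn).
have hb' := hb zn.
have [/norP [/negPn/eqP -> /negPn/eqP ->]| h1] := boolP (~~ ((z1 != 0) || (z3 != 0))).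
  by rewrite /M !expr0n /= mulr0 subr0 mulr0 subr0.
rewrite negbK in h1.
have [yn [e1 he1]] := piM _ _ h1.
case: (ltgtP (v (M z0 z2)) (v (- (pi * M z1 z3)))) => h.
- by have [s1 s2] := sharp _ _ M0n yn h; rewrite s2.
- by have [s1 s2] := sharp _ _ yn M0n h; rewrite addrC s2; split => //; vlia v.
- by move: h; rewrite he0 he1; vlia v.
Qed.

Lemma Acoef b c d : - Delta * c ^+ 2 - pi * M b d != 0 ->
   v (- Delta * c ^+ 2 - pi * M b d) = 0 ->
   [/\ c != 0, v c = 0 & P 1 (pi * M b d)].
Proof.
move=> nz vz.
have [/norP [/negPn/eqP eb /negPn/eqP ed]| h1] := boolP (~~ ((b != 0) || (d != 0))).
  have eM : pi * M b d = 0 by rewrite eb ed /M !expr0n /= mulr0 subr0 mulr0.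
  move: nz vz; rewrite eM subr0 => nz vz.
  have cn : c != 0 by apply: contraNneq nz => ->; rewrite expr0n /= mulr0.
  split => //; last by left.
  by move: vz; rewrite vM ?oppr_eq0 ?expf_neq0 // vN vD vX2 //; vlia v.
rewrite negbK in h1.
have [yn [e1 he1]] := piM _ _ h1.
have [ec|cn] := eqVneq c 0.
  move: vz; rewrite ec expr0n /= mulr0 add0r he1; vlia v.
have cn2 : - Delta * c ^+ 2 != 0 by rewrite mulf_neq0 ?oppr_eq0 ?expf_neq0.
have vc2 : v (- Delta * c ^+ 2) = 2 * v c by rewrite vM ?oppr_eq0 ?expf_neq0 // vN vD vX2 // add0r.
case: (ltgtP (v (- Delta * c ^+ 2)) (v (- (pi * M b d)))) => h.
- have [s1 s2] := sharp _ _ cn2 yn h.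
  move: vz; rewrite s2 vc2 => vz.
  split => //; first by vlia v.
  by right; move: h; rewrite vc2 vz vN; vlia v.
- have [s1 s2] := sharp _ _ yn cn2 h.
  by move: vz; rewrite addrC s2 he1; vlia v.
- by move: h; rewrite vc2 he1; vlia v.
Qed.

Lemma qnormM (x : quat k) : qnorm pi Delta x = M (q0 x) (q2 x) - pi * M (q1 x) (q3 x).
Proof. by case: x => x0 x1 x2 x3; rewrite /qnorm /M /=; ring. Qed.

Lemma main_aux (HD : is_division pi Delta) (eta a1 : quat k)
  (Heta : abs_eq v (qnorm pi Delta eta) (qnorm pi Delta (qi k)))
  (Ha1 : unitOD v pi Delta a1)
  (Ha1p : pure a1) :
  in_ideal v pi
    (qtrace (qmul pi Delta
       (qscal 2 (qinv pi Delta (qmul pi Delta (qmul pi Delta eta a1) (qconj eta))))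
       a1)).
Proof.
case: eta Heta => e0 e1 e2 e3 Heta.
case: a1 Ha1 Ha1p => a0 b c d Ha1 Ha1p.
have ha0 : a0 = -1 * a0 := f_equal (@q0 k) Ha1p.
have a00 : a0 = 0.
  have h2 : a0 + a0 = 0 by rewrite {2}ha0 mulN1r subrr.
  have : 2 * a0 = 0 by rewrite -h2; ring.
  by move/eqP; rewrite mulf_eq0 (negbTE n2) /= => /eqP.
subst a0.
set n := qnorm pi Delta (Quat e0 e1 e2 e3).
have eqi : qnorm pi Delta (qi k) = - pi by rewrite /qnorm /=; ring.
have [nn vn] : n != 0 /\ v n = 1.
  case: Heta; rewrite eqi.
    by case=> _ /eqP; rewrite oppr_eq0 (negbTE pn).
  by case=> -> _ ->; rewrite vN vpi.
set na := qnorm pi Delta (Quat 0 b c d).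
case: Ha1 => anz inna ininv.
have nan : na != 0.
  by apply/negP => /eqP h; apply: anz; apply: HD.
have einv : qnorm pi Delta (qinv pi Delta (Quat 0 b c d)) = na^-1.
  rewrite /qinv qnorm_scal qnorm_conj -/na; by field.
have vna : v na = 0.
  move: inna ininv; rewrite /inOD /inO einv -/na => -[/eqP|h1]; first by rewrite (negbTE nan).
  case=> [/eqP|h2]; first by rewrite invr_eq0 (negbTE nan).
  by move: h2; rewrite vV //; vlia v.
have ena : na = - Delta * c ^+ 2 - pi * M b d by rewrite /na /M /qnorm /=; ring.
have [cn vc PM] := Acoef b c d ltac:(by rewrite -ena) ltac:(by rewrite -ena).
have [x0 [x0n x0v]] := D2.
have [x0nz vx0] := x0unit x0 x0n ltac:(vlia v).
set dl := c * x0.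
have dln : dl != 0 by rewrite mulf_neq0.
have vdl : v dl = 0 by rewrite vM // vc vx0.
have Pa : P 1 (qnorm pi Delta (Quat (-dl) b c d)).
  have -> : qnorm pi Delta (Quat (-dl) b c d) = - (c ^+ 2 * (Delta - x0 ^+ 2)) + - (pi * M b d).
    by rewrite i3 -/na ena /dl; ring.
  apply: PD; apply: PN => //; right.
  by rewrite vM ?expf_neq0 // vX2 //; vlia v.
rewrite Tform i1 (i2 _ _ _ _ _ _ _ _ _ _ dl) -/n -/na.
set z := qmul pi Delta (qmul pi Delta (qmul pi Delta (Quat e0 e1 e2 e3) (Quat (- dl) (- b) (- c) (- d))) (qconj (Quat e0 e1 e2 e3))) (Quat (- dl) b c d).
have pn2 : n ^+ 2 * na * pi != 0 by rewrite !mulf_neq0 // expf_neq0.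
exists (2 * 2 * (n ^+ 2 * na * pi)^-1 * (- dl ^+ 2 * n) + 2 * (n ^+ 2 * na * pi)^-1 * (2 * q0 z)).
split; last first.
  by field; rewrite nn nan pn.
have vDen : v (n ^+ 2 * na * pi) = 3.
  by rewrite vM ?mulf_neq0 ?expf_neq0 // vM ?expf_neq0 // vX2 // vn vna vpi.
have v4 : v (2 * 2 : k) = 2 * v 2 by rewrite vM //; vlia v.
apply: (PD 0).
  right; rewrite vM ?mulf_neq0 ?invr_eq0 ?oppr_eq0 ?expf_neq0 //.
  rewrite vM ?mulf_neq0 ?invr_eq0 // vV // vDen v4.
  rewrite vM ?oppr_eq0 ?expf_neq0 // vN vX2 // vdl vn.
  vlia v.
have [ez|zn] := eqVneq (q0 z) 0; first by left; rewrite ez !mulr0.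
have [Nn Nb] := W2 _ (q1 z) (q2 z) (q3 z) zn.
rewrite -qnormM /z i5 in Nn Nb.
have Nan : qnorm pi Delta (Quat (- dl) b c d) != 0.
  by apply: contraNneq Nn => ->; rewrite expr0n /= mulr0.
have vNa : 1 <= v (qnorm pi Delta (Quat (- dl) b c d)) by case: Pa => // /eqP; rewrite (negbTE Nan).
rewrite vM ?expf_neq0 // vX2 // vX2 // in Nb.
have z2 : 2 * q0 z != 0 by rewrite mulf_neq0.
have i2n : 2 / (n ^+ 2 * na * pi) != 0 by rewrite mulf_neq0 ?invr_eq0.
have pi2n : (n ^+ 2 * na * pi)^-1 != 0 by rewrite invr_eq0.
right; rewrite (vM i2n z2) (vM n2 pi2n) vV // vDen.
vlia v.
Qed.

End Delta.

Lemma deriveD (Delta : k) (v2 : 0 < v 2) (n2 : (2 : k) != 0)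
  (vs : forall n : int, exists x, x != 0 /\ v x = n)
  (Hy : forall y, (forall x, in_ideal v (Delta - x ^+ 2) y) <-> in_ideal v 4 y) :
  (forall x, Delta - x ^+ 2 != 0 /\ v (Delta - x ^+ 2) <= 2 * v 2) /\
  (exists x0, Delta - x0 ^+ 2 != 0 /\ 2 * v 2 <= v (Delta - x0 ^+ 2)).
Proof.
have e4 : (4 : k) = 2 * 2 by ring.
have n4 : (4 : k) != 0 by rewrite e4 mulf_neq0.
have v4 : v 4 = 2 * v 2 by rewrite e4 vM //; vlia v.
have D1 : forall x, Delta - x ^+ 2 != 0 /\ v (Delta - x ^+ 2) <= 2 * v 2.
  move=> x.
  have [_ H] := Hy 4.
  have [|c [[ec|vc] ec4]] := H _ x.
  - by exists 1; split; [right; rewrite v1 | rewrite mulr1].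
  - by move: n4; rewrite ec4 ec mulr0 eqxx.
  have dn : Delta - x ^+ 2 != 0 by apply: contraNneq n4 => e; rewrite ec4 e mul0r.
  have cn : c != 0 by apply: contraNneq n4 => e; rewrite ec4 e mulr0.
  split => //; move: v4; rewrite ec4 vM // => h; vlia v.
split => //.
have [y [yn vy]] := vs (2 * v 2 - 1).
apply: NNPP => H.
have H' : forall x, v (Delta - x ^+ 2) < 2 * v 2.
  move=> x; case: (ltP (v (Delta - x ^+ 2)) (2 * v 2)) => // h.
  by exfalso; apply: H; exists x; split => //; case: (D1 x).
have [H1 _] := Hy y.
have [|c [[ec|vc] ecy]] := H1.
- move=> x; have [dn _] := D1 x.
  exists (y / (Delta - x ^+ 2)); split; last by field.
  right; rewrite vM ?invr_eq0 // vV //; have := H' x; vlia v.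
- by move: yn; rewrite ecy ec mulr0 eqxx.
have cn : c != 0 by apply: contraNneq yn => e; rewrite ecy e mulr0.
by move: vy; rewrite ecy vM // v4; vlia v.
Qed.
End Val.

Theorem lemma5p7 (k : fieldType) (v : k -> int) (pi Delta : k)
  (Hk : dyadic_local_field v)
  (Hpi : pi != 0 /\ v pi = 1)
  (HDelta : min_quad_defect_unit v Delta)
  (HD : is_division pi Delta)
  (eta a1 : quat k)
  (Heta : abs_eq v (qnorm pi Delta eta) (qnorm pi Delta (qi k)))
  (Ha1 : unitOD v pi Delta a1)
  (Ha1p : pure a1) :
  in_ideal v pi
    (qtrace (qmul pi Delta
       (qscal 2 (qinv pi Delta (qmul pi Delta (qmul pi Delta eta a1) (qconj eta))))
       a1)).
Proof.
case: Hk => vM [vU [vs [_ [_ [hchar v2]]]]].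
have n2 : (2 : k) != 0 by exact: (hchar 1%N).
case: HDelta => DnZ vD Hy.
have [D1 D2] := @deriveD k v vM vU Delta v2 n2 vs Hy.
case: Hpi => pn vpi.
exact: (@main_aux k v vM vU Delta v2 n2 DnZ vD D1 D2 pi pn vpi HD eta a1 Heta Ha1 Ha1p).
Qed.
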